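(* Let $\Psi$ be an SP-expression in the $n\ge 1$ distinct variables $x_1,\dots,x_n$, let $\alpha$ be the SP-order on $X=\{x_1,\dots,x_n\}$ determined by $\Psi$, and let $\alpha^{*}$ be the SP-order determined by the dual expression $\Psi^{*}$. Define the quantitative entropy $H_q=\log_2|R(\alpha)|$, the positional entropy $H_p=\log_2|R(\alpha^{*})|$, and $H_{max}=\log_2(n!)$. Then $$H_p+H_q=H_{max},$$ equivalently $|R(\alpha)|\cdot|R(\alpha^{*})| = n!$.
   Context: All partial orders are finite. For posets $\alpha_1=(A_1,\sqsubseteq_1)$, $\alpha_2=(A_2,\sqsubseteq_2)$ with $A_1\cap A_2=\emptyset$, the series composition is $\alpha_1\otimes\alpha_2=(A_1\cup A_2,\ \sqsubseteq_1\cup\sqsubseteq_2\cup(A_1\times A_2))$ (every element of $\alpha_1$ lies below every element of $\alpha_2$) and the parallel composition is $\alpha_1\parallel\alpha_2=(A_1\cup A_2,\ \sqsubseteq_1\cup\sqsubseteq_2)$. An SP-expression is built from variables $x_i$ using the binary symbols $\otimes$ and $\parallel$ (with brackets), each variable occurring at most once. The SP-order determined by an SP-expression $\Psi$ is obtained by interpreting each variable $x_i$ as the one-element poset on $\{x_i\}$, each $\otimes$ as series composition and each $\parallel$ as parallel composition, evaluated according to the bracketing; its underlying set is the set of variables of $\Psi$. The dual expression $\Psi^{*}$ is obtained from $\Psi$ by interchanging every $\otimes$ with $\parallel$ and vice versa (e.g. the dual of $((x_1\otimes x_2)\parallel x_3)\otimes x_4$ is $((x_1\parallel x_2)\otimes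 x_3)\parallel x_4$). For a poset $\alpha=(X,\sqsubseteq)$ with $|X|=n$, its state space $R(\alpha)$ is the set of root states, i.e. bijections $l:X\to\{1,\dots,n\}$ that are increasing ($x\sqsubseteq y$, $x\neq y$ implies $l(x)<l(y)$); these are the topological sorts (linear extensions) of $\alpha$ up to isomorphism of labelings, the elements $x_1,\dots,x_n$ being distinguishable. In particular for the discrete (antichain) order $\Delta_n$ one has $|R(\Delta_n)|=n!$. *)

(* Defs.v *)
From mathcomp Require Import all_boot all_order all_fingroup.
Set Implicit Arguments. Unset Strict Implicit. Unset Printing Implicit Defensive.

Inductive spexpr (T : Type) : Type :=
  | SPVar of T
  | SPSer of spexpr T & spexpr T
  | SPPar of spexpr T & spexpr T.

Section SP.
Variable T : eqType.

Fixpoint sp_vars (e : spexpr T) : seq T :=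
  match e with
  | SPVar x => [:: x]
  | SPSer a b => sp_vars a ++ sp_vars b
  | SPPar a b => sp_vars a ++ sp_vars b
  end.

Fixpoint sp_le (e : spexpr T) (x y : T) : bool :=
  match e with
  | SPVar z => (x == z) && (y == z)
  | SPSer a b => [|| sp_le a x y, sp_le b x y | (x \in sp_vars a) && (y \in sp_vars b)]
  | SPPar a b => sp_le a x y || sp_le b x y
  end.

Fixpoint sp_dual (e : spexpr T) : spexpr T :=
  match e with
  | SPVar x => SPVar x
  | SPSer a b => SPPar (sp_dual a) (sp_dual b)
  | SPPar a b => SPSer (sp_dual a) (sp_dual b)
  end.
End SP.

Definition sp_wf (n : nat) (e : spexpr 'I_n) : Prop :=
  uniq (sp_vars e) /\ forall x : 'I_n, x \in sp_vars e.

(* Root states of the order determined by e on X = 'I_n: bijections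
   l : X -> {0,..,n-1} (labels shifted by one) that are increasing. *)
Definition root_states (n : nat) (e : spexpr 'I_n) : {set {perm 'I_n}} :=
  [set l : {perm 'I_n} | [forall x, forall y,
      (sp_le e x y && (x != y)) ==> (l x < l y)]].

(* Main.v *)
From mathcomp Require Import all_boot all_order all_fingroup.
From mathcomp Require Import zify.
Require Import Defs.
Set Implicit Arguments. Unset Strict Implicit. Unset Printing Implicit Defensive.

Lemma sub2_index (T : eqType) (s : seq T) (x y : T) : uniq s -> x != y ->
  subseq [:: x; y] s = [&& x \in s, y \in s & index x s < index y s].
Proof.
elim: s => [|z s IH] //= /andP[zs us] xy.
rewrite !inE.
have [exz|nxz] := eqVneq x z.
  have yx : (y == x) = false by rewrite eq_sym (negbTE xy).
  subst z; rewrite sub1seq (negbTE xy) yx /=.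
  by case: (y \in s).
rewrite (IH us xy) /=.
have [eyz|nyz] := eqVneq y z.
  by subst z; rewrite (negbTE zs) !andbF.
by [].
Qed.

Section Lists.
Variable T : eqType.

Fixpoint merge (m : bitseq) (s t : seq T) : seq T :=
  match m with
  | [::] => [::]
  | true :: m' => if s is x :: s' then x :: merge m' s' t else [::]
  | false :: m' => if t is y :: t' then y :: merge m' s t' else [::]
  end.

Lemma merge_split (p : pred T) (u : seq T) :
  merge (map p u) (filter p u) (filter (predC p) u) = u.
Proof. by elim: u => [|z u IH] //=; case: (p z) => /=; rewrite IH. Qed.

Lemma merge_spec (p : pred T) m s t :
  all p s -> all (predC p) t -> count id m = size s -> size m = size s + size t ->
  [/\ filter p (merge m s t) = s, filter (predC p) (merge m s t) = t &
      map p (merge m s t) = m].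
Proof.
elim: m s t => [|b m IH] s t.
  by case: s => [|x s]; case: t => [|y t] //= _ _ _; rewrite ?addSn ?addnS.
case: b => /=.
  case: s => [|x s] /=.
    by move=> _ _ /eqP; rewrite add1n.
  move=> /andP[px ps] pt /eqP; rewrite add1n eqSS => /eqP cm.
  rewrite addSn => -[sm].
  have [-> -> ->] := IH s t ps pt cm sm.
  by rewrite px.
case: t => [|y t] ps /=.
  move=> _ cm sm; have := count_size id m; move: cm sm => /=; lia.
move=> /andP[py pt]; rewrite add0n => cm; rewrite addnS => -[sm].
have [-> -> ->] := IH s t ps pt cm sm.
by rewrite py (negbTE py).
Qed.

Lemma sep_filter (p : pred T) u : uniq u ->
  (forall x y, x \in u -> y \in u -> p x -> ~~ p y -> subseq [:: x; y] u) ->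
  u = filter p u ++ filter (predC p) u.
Proof.
elim: u => [|z u IH] //= /andP[zu uu] H.
case pz: (p z) => /=.
  congr (_ :: _); apply: IH => // x y xu yu px npy.
  have := H x y; rewrite !inE xu yu !orbT => /(_ isT isT px npy) /=.
  have -> : (x == z) = false by apply/negP => /eqP exz; rewrite -exz xu in zu.
  by [].
have allnp : all (predC p) u.
  apply/allP => x xu /=; apply/negP => px.
have xz : x != z by apply/negP => /eqP exz; rewrite -exz xu in zu.
have := H x z; rewrite !inE xu eqxx orbT pz (negbTE xz) => /(_ isT isT px isT).
by rewrite sub2_index // (negbTE zu) andbF.
rewrite (all_filterP allnp).
have -> : filter p u = [::].
  by apply/eqP; rewrite -[_ == _]negbK -has_filter; apply/hasPn => x /(allP allnp).
by [].
Qed.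

End Lists.

Fixpoint all_bits (N : nat) : seq bitseq :=
  if N is N'.+1 then map (cons true) (all_bits N') ++ map (cons false) (all_bits N')
  else [:: [::]].

Lemma mem_cons_map (c b : bool) m (A : seq bitseq) :
  (b :: m \in map (cons c) A) = (b == c) && (m \in A).
Proof.
apply/mapP/andP => [[m' m'A [-> ->]]|[/eqP -> mA]]; first by [].
by exists m.
Qed.

Lemma nil_map_cons (c : bool) (A : seq bitseq) : ([::] \in map (cons c) A) = false.
Proof. by apply/mapP => -[]. Qed.

Lemma mem_all_bits N m : (m \in all_bits N) = (size m == N).
Proof.
elim: N m => [|N IH] [|b m] //=; rewrite ?inE // mem_cat ?nil_map_cons //.
rewrite (mem_cons_map true) (mem_cons_map false) IH eqSS.
by case: b; case: (size m == N).
Qed.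

Lemma uniq_all_bits N : uniq (all_bits N).
Proof.
have ci c : injective (cons c) by move=> ? ? [].
elim: N => [|N IH] //=; rewrite cat_uniq !map_inj_uniq ?IH //.
rewrite andbT; apply/hasPn => -[|b m] //=; first by rewrite nil_map_cons.
  by rewrite (mem_cons_map true) (mem_cons_map false); case: b.
all: apply: ci.
Qed.

Lemma count_all_bits N i :
  count (fun m => count id m == i) (all_bits N) = 'C(N, i).
Proof.
elim: N i => [|N IH] i /=; first by rewrite bin0n; case: i.
have IH' : forall j, count (preim (cons false) (fun m => count id m == j)) (all_bits N) = 'C(N, j) := IH.
rewrite count_cat !count_map IH'.
rewrite (eq_count (a2 := fun m => (count id m == i.-1) && (0 < i))); last first.
  by move=> m /=; case: i => [|i]; rewrite add1n ?eqSS ?andbT ?andbF.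
case: i => [|i] /=.
  by rewrite (eq_count (a2 := pred0)) ?count_pred0 ?bin0 //= => m; rewrite andbF.
rewrite (eq_count (a2 := fun m => count id m == i)); last by move=> m; rewrite andbT.
by rewrite IH binS addnC.
Qed.

Definition masks (i j : nat) : seq bitseq :=
  [seq m <- all_bits (i + j) | count id m == i].

Lemma mem_masks i j m : (m \in masks i j) = (size m == i + j) && (count id m == i).
Proof. by rewrite mem_filter mem_all_bits andbC. Qed.

Lemma uniq_masks i j : uniq (masks i j).
Proof. by rewrite filter_uniq ?uniq_all_bits. Qed.

Lemma size_masks i j : size (masks i j) = 'C(i + j, i).
Proof. by rewrite size_filter count_all_bits. Qed.

Section SPT.
Variable T : finType.
Implicit Types (e a b : spexpr T) (u s t : seq T).

Definition resp e s : bool :=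
  [forall x, forall y, (sp_le e x y && (x != y)) ==> subseq [:: x; y] s].

Lemma respP e s :
  reflect (forall x y, sp_le e x y -> x != y -> subseq [:: x; y] s) (resp e s).
Proof.
apply: (iffP forallP) => [H x y lxy nxy|H x].
  by have /forallP/(_ y) := H x; rewrite lxy nxy.
by apply/forallP => y; apply/implyP => /andP[]; apply: H.
Qed.

Definition ext e s := perm_eq s (sp_vars e) && resp e s.

Lemma sp_le_vars e x y : sp_le e x y -> (x \in sp_vars e) && (y \in sp_vars e).
Proof.
elim: e => [z|a IHa b IHb|a IHa b IHb] /=.
- by case/andP => /eqP -> /eqP ->; rewrite inE eqxx.
- rewrite !mem_cat; case/or3P => [/IHa|/IHb|//] /andP[-> ->]; by rewrite ?orbT.
- rewrite !mem_cat; case/orP => [/IHa|/IHb] /andP[-> ->]; by rewrite ?orbT.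
Qed.

Fixpoint LE e : seq (seq T) :=
  match e with
  | SPVar x => [:: [:: x]]
  | SPSer a b => [seq s ++ t | s <- LE a, t <- LE b]
  | SPPar a b => [seq merge m st.1 st.2 | st <- [seq (s, t) | s <- LE a, t <- LE b],
                   m <- masks (size (sp_vars a)) (size (sp_vars b))]
  end.

Fixpoint cnt e : nat :=
  match e with
  | SPVar x => 1
  | SPSer a b => cnt a * cnt b
  | SPPar a b => cnt a * cnt b * 'C(size (sp_vars a) + size (sp_vars b), size (sp_vars a))
  end.

Lemma size_LE e : size (LE e) = cnt e.
Proof.
elim: e => [x|a IHa b IHb|a IHa b IHb] //=; rewrite !size_allpairs ?size_masks.
  by rewrite IHa IHb.
by rewrite IHa IHb.
Qed.

Lemma vars_dual e : sp_vars (sp_dual e) = sp_vars e.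
Proof. by elim: e => [x|a IHa b IHb|a IHa b IHb] //=; rewrite IHa IHb. Qed.

Lemma cnt_dual e : cnt e * cnt (sp_dual e) = (size (sp_vars e))`!.
Proof.
elim: e => [x|a IHa b IHb|a IHa b IHb] //=; rewrite ?vars_dual size_cat;
  rewrite -(bin_fact (leq_addr (size (sp_vars b)) (size (sp_vars a)))) addKn -IHa -IHb;
  move: (cnt a) (cnt b) (cnt (sp_dual a)) (cnt (sp_dual b)) ('C(_, _)) => p q r s c; nia.
Qed.
End SPT.
Section Main.
Variable T : finType.
Implicit Types (e a b : spexpr T) (u s t : seq T).

Definition pv e : pred T := fun x => x \in sp_vars e.

Lemma disj a b x : uniq (sp_vars a ++ sp_vars b) -> x \in sp_vars b -> x \notin sp_vars a.
Proof. by rewrite cat_uniq => /and3P[_ /hasPn H _] /H. Qed.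

Lemma filt_cat a b : uniq (sp_vars a ++ sp_vars b) ->
  filter (pv a) (sp_vars a ++ sp_vars b) = sp_vars a /\
  filter (predC (pv a)) (sp_vars a ++ sp_vars b) = sp_vars b.
Proof.
move=> uv; rewrite !filter_cat; split.
  rewrite (all_filterP (allss _)).
  have -> : filter (pv a) (sp_vars b) = [::]; last by rewrite cats0.
  apply/eqP; rewrite -[_ == _]negbK -has_filter; apply/hasPn => x xb.
  exact: disj uv xb.
have -> : filter (predC (pv a)) (sp_vars a) = [::].
  apply/eqP; rewrite -[_ == _]negbK -has_filter; apply/hasPn => x xa.
  by rewrite /= /pv negbK.
rewrite (all_filterP _) //; apply/allP => x xb /=; exact: disj uv xb.
Qed.

Lemma ext_split a b u : uniq (sp_vars a ++ sp_vars b) ->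
  perm_eq u (sp_vars a ++ sp_vars b) -> resp a u -> resp b u ->
  ext a (filter (pv a) u) && ext b (filter (predC (pv a)) u).
Proof.
move=> uv pu /respP ra /respP rb; have [fa fb] := filt_cat uv.
apply/andP; split; apply/andP; split.
- by rewrite -fa perm_filter.
- apply/respP => x y lxy nxy; rewrite subseq_filter ra // andbT.
  by have /andP[xa ya] := sp_le_vars lxy; rewrite /= /pv xa ya.
- by rewrite -fb perm_filter.
- apply/respP => x y lxy nxy; rewrite subseq_filter rb // andbT.
  by have /andP[xb yb] := sp_le_vars lxy; rewrite /= /pv (disj uv xb) (disj uv yb).
Qed.

Lemma ext_join a b u : ext a (filter (pv a) u) -> ext b (filter (predC (pv a)) u) ->
  resp a u && resp b u.
Proof.
move=> /andP[_ /respP ra] /andP[_ /respP rb]; apply/andP; split; apply/respP => x y lxy nxy.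
  by apply: subseq_trans (ra x y lxy nxy) (filter_subseq _ _).
by apply: subseq_trans (rb x y lxy nxy) (filter_subseq _ _).
Qed.

Lemma merge_ok a b s t m : uniq (sp_vars a ++ sp_vars b) -> ext a s -> ext b t ->
  m \in masks (size (sp_vars a)) (size (sp_vars b)) ->
  [/\ filter (pv a) (merge m s t) = s, filter (predC (pv a)) (merge m s t) = t &
      map (pv a) (merge m s t) = m].
Proof.
move=> uv /andP[ps _] /andP[pt _]; rewrite mem_masks => /andP[/eqP sm /eqP cm].
apply: merge_spec.
- by apply/allP => x; rewrite (perm_mem ps).
- by apply/allP => x; rewrite (perm_mem pt) /=; apply: disj uv.
- by rewrite cm (perm_size ps).
- by rewrite sm (perm_size ps) (perm_size pt).
Qed.

Lemma LE_spec e : uniq (sp_vars e) -> uniq (LE e) /\ (forall u, (u \in LE e) = ext e u).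
Proof.
elim: e => [x|a IHa b IHb|a IHa b IHb] /=.
- move=> _; split => // u; rewrite inE /ext.
  have -> : resp (SPVar x) u.
    by apply/respP => y z /= /andP[/eqP -> /eqP ->]; rewrite eqxx.
  rewrite andbT; apply/eqP/idP => [->|pu]; first exact: perm_refl.
  have := perm_size pu; case: u pu => [|y [|]] // pu _.
  by have := perm_mem pu y; rewrite !inE eqxx => /esym/eqP ->.
- move=> uv; have := uv; rewrite cat_uniq => /and3P[ua _ ub].
  have [uLa Ma] := IHa ua; have [uLb Mb] := IHb ub.
  split.
    apply: allpairs_uniq => // -[s t] [s' t'] /allpairsP[[s1 t1] /= [s1a _ [-> ->]]].
    move=> /allpairsP[[s2 t2] /= [s2a _ [-> ->]]] /= /eqP.
    rewrite eqseq_cat; first by case/andP => /eqP -> /eqP ->.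
    rewrite Ma in s1a; rewrite Ma in s2a.
    by case/andP: s1a => /perm_size ->; case/andP: s2a => /perm_size ->.
  move=> u; apply/allpairsP/idP.
    move=> [[s t] /= [sa tb ->]]; rewrite Ma in sa; rewrite Mb in tb.
    case/andP: sa => ps /respP rs; case/andP: tb => pt /respP rt.
    apply/andP; split; first by rewrite perm_cat.
    apply/respP => x y /= /or3P[lxy|lxy|/andP[xa yb]] nxy.
    + exact: subseq_trans (rs x y lxy nxy) (prefix_subseq _ _).
    + exact: subseq_trans (rt x y lxy nxy) (suffix_subseq _ _).
    + rewrite -[[:: x; y]]/([:: x] ++ [:: y]); apply: cat_subseq.
        by rewrite sub1seq (perm_mem ps).
      by rewrite sub1seq (perm_mem pt).
  case/andP => pu /respP ru.
  have uu : uniq u by rewrite (perm_uniq pu).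
  have ra : resp a u by apply/respP => x y lxy; apply: ru; rewrite /= lxy.
  have rb : resp b u by apply/respP => x y lxy; apply: ru; rewrite /= lxy orbT.
  have /andP[ea eb] := ext_split uv pu ra rb.
  exists (filter (pv a) u, filter (predC (pv a)) u); rewrite /= Ma Mb; split => //.
  apply: sep_filter => // x y xu yu px npy.
  have yb : y \in sp_vars b.
    by move: yu; rewrite (perm_mem pu) mem_cat; case/orP => // ya; rewrite /= /pv ya in npy.
  have xa : x \in sp_vars a := px.
  apply: ru; first by rewrite /= xa yb !orbT.
  by apply/negP => /eqP exy; rewrite exy /= in px; rewrite px in npy.
- move=> uv; have := uv; rewrite cat_uniq => /and3P[ua _ ub].
  have [uLa Ma] := IHa ua; have [uLb Mb] := IHb ub.
  have ust : uniq [seq (s, t) | s <- LE a, t <- LE b].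
    by apply: allpairs_uniq => // -[? ?] [? ?].
  split.
    apply: allpairs_uniq => //; first exact: uniq_masks.
    move=> [[s t] m] [[s' t'] m'] /allpairsP[[[s1 t1] m1] /= [st1 m1M [-> -> ->]]].
    move=> /allpairsP[[[s2 t2] m2] /= [st2 m2M [-> -> ->]]] /= E.
    move: st1 st2 E => /allpairsP[[s3 t3] /= [s3a t3b [-> ->]]].
    move=> /allpairsP[[s4 t4] /= [s4a t4b [-> ->]]] E.
    rewrite Ma in s3a; rewrite Ma in s4a; rewrite Mb in t3b; rewrite Mb in t4b.
    have [f1 g1 h1] := merge_ok uv s3a t3b m1M.
    have [f2 g2 h2] := merge_ok uv s4a t4b m2M.
    have -> : s3 = s4 by rewrite -f1 E f2.
    have -> : t3 = t4 by rewrite -g1 E g2.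
    by have -> : m1 = m2 by rewrite -h1 E h2.
  move=> u; apply/allpairsP/idP.
    move=> [[[s t] m] /= [/allpairsP[[s3 t3] /= [sa tb [-> ->]]] mM ->]].
    rewrite Ma in sa; rewrite Mb in tb.
    have [f1 g1 h1] := merge_ok uv sa tb mM.
    rewrite /ext; apply/andP; split.
      by rewrite -(perm_filterC (pv a)) f1 g1 perm_cat //; [case/andP: sa|case/andP: tb].
    have sa' : ext a (filter (pv a) (merge m s3 t3)) by rewrite f1.
    have tb' : ext b (filter (predC (pv a)) (merge m s3 t3)) by rewrite g1.
    have /andP[/respP r1 /respP r2] := ext_join sa' tb'.
    by apply/respP => x y /= /orP[] lxy nxy; [apply: r1|apply: r2].
  case/andP => pu /respP ru.
  have ra : resp a u by apply/respP => x y lxy; apply: ru; rewrite /= lxy.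
  have rb : resp b u by apply/respP => x y lxy; apply: ru; rewrite /= lxy orbT.
  have /andP[ea eb] := ext_split uv pu ra rb.
  exists ((filter (pv a) u, filter (predC (pv a)) u), map (pv a) u); split.
  - by apply/allpairsP; exists (filter (pv a) u, filter (predC (pv a)) u); rewrite /= Ma Mb.
  - rewrite mem_masks size_map (perm_size pu) size_cat eqxx /=.
    by rewrite count_map -size_filter; case/andP: ea => /perm_size ->.
  - by rewrite /= merge_split.
Qed.
End Main.

Lemma index_eq_seq (T : eqType) (u v : seq T) : uniq u -> size u = size v ->
  (forall x, index x u = index x v) -> u = v.
Proof.
case: u => [|a u'] uu; first by case: v.
move=> sz H; apply: (eq_from_nth (x0 := a)) => // i ilt.
set w := nth a (a :: u') i.
have wi : index w v = i by rewrite -H index_uniq.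
have wv : w \in v by rewrite -index_mem wi -sz.
by rewrite -wi nth_index.
Qed.

Section Fin.
Variable n : nat.
Definition sq (l : {perm 'I_n}) : seq 'I_n := [seq (l^-1)%g i | i <- enum 'I_n].

Lemma sq_index l x : index x (sq l) = l x.
Proof. by rewrite -{1}(permK l x) index_map ?index_enum_ord //; exact: perm_inj. Qed.

Lemma sq_uniq l : uniq (sq l).
Proof. by rewrite map_inj_uniq ?enum_uniq //; exact: perm_inj. Qed.

Lemma mem_sq l x : x \in sq l.
Proof. by rewrite -(permK l x) map_f ?mem_enum. Qed.

Lemma size_sq l : size (sq l) = n.
Proof. by rewrite size_map size_enum_ord. Qed.

Lemma sq_inj : injective sq.
Proof.
move=> l l' E; apply/permP => x; apply: val_inj.
by rewrite /= -sq_index E sq_index.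
Qed.

Lemma root_resp (e : spexpr 'I_n) l : (l \in root_states e) = resp e (sq l).
Proof.
rewrite inE /resp; apply: eq_forallb => x; apply: eq_forallb => y.
case: (sp_le e x y) => //=; case: eqVneq => [//|nxy] /=.
by rewrite sub2_index ?sq_uniq // !mem_sq !sq_index.
Qed.

Lemma card_root (e : spexpr 'I_n) : sp_wf e -> #|root_states e| = size (LE e).
Proof.
move=> [uv allv]; have [uL ML] := LE_spec uv.
have pv : perm_eq (sp_vars e) (enum 'I_n).
  by apply: uniq_perm; rewrite ?enum_uniq // => x; rewrite mem_enum allv.
rewrite cardE -(size_map sq); apply: perm_size; apply: uniq_perm => //.
  rewrite map_inj_uniq ?enum_uniq //; exact: sq_inj.
move=> u; rewrite ML; apply/mapP/idP.
  move=> [l]; rewrite mem_enum root_resp => lr ->; rewrite /ext lr andbT.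
  by apply: uniq_perm; rewrite ?sq_uniq // => x; rewrite mem_sq allv.
case/andP => pu ru.
have uu : uniq u by rewrite (perm_uniq pu).
have szu : size u = n by rewrite (perm_size pu) (perm_size pv) size_enum_ord.
have xu x : x \in u by rewrite (perm_mem pu) allv.
have ilt x : index x u < n by rewrite -[X in _ < X]szu index_mem.
pose f x := Ordinal (ilt x).
have finj : injective f.
  move=> x y /(congr1 val) /= E.
  by rewrite -[x](nth_index x (xu x)) E nth_index.
have E : sq (perm finj) = u.
  apply: index_eq_seq; rewrite ?sq_uniq ?size_sq //.
  by move=> x; rewrite sq_index permE.
exists (perm finj); last by rewrite E.
by rewrite mem_enum root_resp E.
Qed.
End Fin.

Theorem mainTheorem1 (n : nat) (Psi : spexpr 'I_n) :
  1 <= n -> sp_wf Psi ->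
  #|root_states Psi| * #|root_states (sp_dual Psi)| = n`!.
Proof.
move=> _ wf.
have wfd : sp_wf (sp_dual Psi) by rewrite /sp_wf vars_dual.
rewrite !card_root // !size_LE cnt_dual.
case: wf => uv allv.
have pv : perm_eq (sp_vars Psi) (enum 'I_n).
  by apply: uniq_perm; rewrite ?enum_uniq // => x; rewrite mem_enum allv.
by rewrite (perm_size pv) size_enum_ord.
Qed.
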